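(* Consider a finite discounted MDP as described in the context, with discount factor $\alpha\in(0,1)$, terminal reward vector $v^0\in\mathbb{R}^m$, and accuracy $\epsilon>0$. Let $v^1(x):=\max_{a\in A(x)}r(x,a)$ for $x\in\mathbb{X}$, assume the coefficient $\gamma$ of the MDP satisfies $\gamma\in(0,1]$, and assume $sp(v^1)+sp(v^0)>0$. Then the value iteration algorithm (described in the context) finds a deterministic $\epsilon$-optimal policy after a finite number of iterations bounded above by $$F(\alpha):=\max\left\{\left\lceil\frac{\log\frac{(1-\alpha)\epsilon\gamma}{sp(v^1)+(1+\alpha)sp(v^0)}}{\log(\alpha\gamma)}\right\rceil,1\right\}.$$ Furthermore, for any fixed $\epsilon>0$, any fixed $\gamma\in(0,1]$ and any fixed $v^0,v^1\in\mathbb{R}^m$ with $sp(v^1)+sp(v^0)>0$, the function $F$ defined by this formula on $\alpha\in(0,1)$ satisfies: (a) $\lim_{\alpha\downarrow0}F(\alpha)=1$ and $\lim_{\alpha\uparrow1}F(\alpha)=+\infty$; (b) $F(\alpha)$ is non-decreasing in $\alpha$.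
   Context: A finite MDP has state space $\mathbb{X}=\{1,\dots,m\}$, nonempty finite action sets $A(x)$ for $x\in\mathbb{X}$, with $k=\sum_{x}|A(x)|$; one-step rewards $r(x,a)\in\mathbb{R}$ and transition probabilities $p(y|x,a)$ with $\sum_y p(y|x,a)=1$; and a terminal reward vector $v^0\in\mathbb{R}^m$. For a policy $\pi$ (possibly randomized and history-dependent) and initial state $x$, $v^\pi_\alpha(x)=\mathbb{E}^\pi_x\sum_{t=0}^\infty \alpha^t r(x_t,a_t)$ and $v_\alpha(x)=\sup_\pi v^\pi_\alpha(x)$. A policy $\pi$ is $\epsilon$-optimal if $v^\pi_\alpha(x)\ge v_\alpha(x)-\epsilon$ for all $x$. A deterministic policy is a map $\phi$ with $\phi(x)\in A(x)$. For $v\in\mathbb{R}^m$, $T^a_\alpha v(x)=r(x,a)+\alpha\sum_{y}p(y|x,a)v(y)$, $T^\phi_\alpha v(x)=T^{\phi(x)}_\alpha v(x)$, $T_\alpha v(x)=\max_{a\in A(x)}T^a_\alpha v(x)$. The span seminorm is $sp(u)=\max_x u(x)-\min_x u(x)$. The coefficient $\gamma$ of the MDP is $\gamma:=\max_{x,y\in\mathbb{X},\,a\in A(x),\,b\in A(y)}\big[1-\sum_{z}\min\{p(z|x,a),p(z|y,b)\}\big]$. Value iteration algorithm (given $\alpha\in(0,1)$, $\epsilon>0$): (1) set $u:=v^0$ and a number $\Delta>\frac{1-\alpha}{\alpha}\epsilon$; (2) while $\Delta>\frac{1-\alpha}{\alpha}\epsilon$: compute $v:=T_\alpha u$, set $\Delta:=sp(u-v)$,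 $u^*:=u$, $u:=v$ (each pass is one iteration); (3) output a deterministic policy $\phi$ with $v=T^\phi_\alpha u^*$. *)

(* Defs.v *)
From HB Require Import structures.
From mathcomp Require Import all_boot all_order all_algebra.
From mathcomp Require Import all_classical all_reals all_analysis.
Set Implicit Arguments. Unset Strict Implicit. Unset Printing Implicit Defensive.
Import Order.TTheory GRing.Theory Num.Theory.
Import numFieldNormedType.Exports.
Local Open Scope classical_set_scope.
Local Open Scope ring_scope.

Section MDP.
Variable R : realType.
Variable m : nat.
Local Notation X := ('I_m.+1).
Variable Act : finType.
Variable A : X -> {set Act}.
Variable r : X -> Act -> R.
Variable p : X -> Act -> X -> R.   (* p x a y = p(y|x,a)            *)

Definition maxA (x : X) (f : Act -> R) : R :=
  match [pick a in A x] with
  | Some a0 => \big[Num.max/f a0]_(a in A x) f a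
  | None => 0
  end.

Definition vmax (u : X -> R) : R := \big[Num.max/u ord0]_(x : X) u x.
Definition vmin (u : X -> R) : R := \big[Num.min/u ord0]_(x : X) u x.
Definition sp (u : X -> R) : R := vmax u - vmin u.

Definition Ta (alpha : R) (a : Act) (v : X -> R) (x : X) : R :=
  r x a + alpha * \sum_(y : X) p x a y * v y.
Definition Tphi (alpha : R) (phi : X -> Act) (v : X -> R) (x : X) : R :=
  Ta alpha (phi x) v x.
Definition T (alpha : R) (v : X -> R) (x : X) : R :=
  maxA x (fun a => Ta alpha a v x).

Definition v1 (x : X) : R := maxA x (r x).

Definition gamma : R :=
  \big[Num.max/0]_(x : X) \big[Num.max/0]_(y : X)
   \big[Num.max/0]_(a in A x) \big[Num.max/0]_(b in A y)
     (1 - \sum_(z : X) Num.min (p x a z) (p y b z)).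

(* randomized history-dependent policies: pi h x a is the probability
   of choosing a in current state x after history h (past state-action pairs) *)
Definition policy := seq (X * Act) -> X -> Act -> R.

Definition is_policy (pi : policy) : Prop :=
  forall h x, (forall a, 0 <= pi h x a) /\ (forall a, a \notin A x -> pi h x a = 0)
              /\ \sum_(a in A x) pi h x a = 1.

(* expected discounted reward of the first N steps, starting after history h
   in state x (the expectation of sum_{t<N} alpha^t r(x_t,a_t)) *)
Fixpoint vN (alpha : R) (pi : policy) (N : nat) (h : seq (X * Act)) (x : X) : R :=
  match N with
  | 0 => 0
  | N'.+1 => \sum_(a : Act) pi h x a *
              (r x a + alpha * \sum_(y : X) p x a y * vN alpha pi N' (rcons h (x, a)) y)
  end.

Definition vpi (alpha : R) (pi : policy) (x : X) : R :=
  limn (fun N => vN alpha pi N [::] x).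

Definition vopt (alpha : R) (x : X) : R :=
  sup [set vpi alpha pi x | pi in is_policy].

Definition eps_optimal (alpha eps : R) (pi : policy) : Prop :=
  forall x, vopt alpha x - eps <= vpi alpha pi x.

Definition det_policy (phi : X -> Act) : policy :=
  fun _ x a => if a == phi x then 1 else 0.

Definition VI (alpha : R) (v0 : X -> R) (n : nat) : X -> R := iter n (T alpha) v0.

End MDP.

Definition Fbound (R : realType) (m : nat) (eps gam : R) (v1 v0 : 'I_m.+1 -> R) (alpha : R) : R :=
  Num.max
    ((Num.ceil (ln ((1 - alpha) * eps * gam / (sp v1 + (1 + alpha) * sp v0))
                / ln (alpha * gam)))%:~R)
    1.

(* Main.v *)
Require Import Defs.
From HB Require Import structures.
From mathcomp Require Import all_boot all_order all_algebra.
From mathcomp Require Import all_classical all_reals all_analysis.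
From mathcomp Require Import ring lra.
Import Order.TTheory GRing.Theory Num.Theory.
Import numFieldNormedType.Exports.
Local Open Scope classical_set_scope.
Local Open Scope ring_scope.
Section Basics.
Variable R : realType.
Variable m : nat.
Local Notation X := ('I_m.+1).
Variable Act : finType.
Variable A : X -> {set Act}.
Variable r : X -> Act -> R.
Variable p : X -> Act -> X -> R.
Hypothesis HA : forall x, exists a, a \in A x.
Hypothesis Hp : forall x a, a \in A x -> (forall y, 0 <= p x a y) /\ \sum_(y : X) p x a y = 1.

Lemma maxA_ge x (f : Act -> R) a : a \in A x -> f a <= Defs.maxA A x f.
Proof.
move=> Ha; rewrite /Defs.maxA; case: pickP => [a0 Ha0|H]; last by rewrite H in Ha.
exact: le_bigmax_cond.
Qed.

Lemma maxA_le x (f : Act -> R) c : (forall a, a \in A x -> f a <= c) -> Defs.maxA A x f <= c.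
Proof.
move=> H; rewrite /Defs.maxA; case: pickP => [a0 Ha0|H0].
  by apply: bigmax_le => //; apply: H.
by have [a Ha] := HA x; rewrite H0 in Ha.
Qed.

Lemma maxA_ex x (f : Act -> R) : exists2 a, a \in A x & Defs.maxA A x f = f a.
Proof.
rewrite /Defs.maxA; case: pickP => [a0 Ha0|H0]; last first.
  by have [a Ha] := HA x; rewrite H0 in Ha.
elim/big_ind: _ => [|u v [a1 H1 ->] [a2 H2 ->]|a Ha]; first by exists a0.
  by rewrite /Num.max; case: ifP => _; [exists a2|exists a1].
by exists a.
Qed.

Lemma vmax_ge (u : X -> R) x : u x <= vmax u.
Proof. exact: le_bigmax. Qed.
Lemma vmin_le (u : X -> R) x : vmin u <= u x.
Proof. exact: bigmin_le. Qed.
Lemma vmax_le (u : X -> R) c : (forall x, u x <= c) -> vmax u <= c.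
Proof. by move=> H; apply: bigmax_le. Qed.
Lemma vmin_ge (u : X -> R) c : (forall x, c <= u x) -> c <= vmin u.
Proof. by move=> H; apply: le_bigmin. Qed.
Lemma sp_ge0 (u : X -> R) : 0 <= sp u.
Proof. by rewrite /sp subr_ge0 (le_trans (vmin_le u ord0)) // vmax_ge. Qed.
Lemma sp_le (u : X -> R) K : (forall x y, u x - u y <= K) -> sp u <= K.
Proof.
move=> H; rewrite /sp lerBlDr; apply: vmax_le => x; rewrite -lerBlDl.
by apply: vmin_ge => y; rewrite lerBlDl -lerBlDr.
Qed.
Lemma sp_ge (u : X -> R) x y : u x - u y <= sp u.
Proof. by rewrite /sp lerB // ?vmax_ge ?vmin_le. Qed.

Lemma sum_p_le x a (f : X -> R) : a \in A x -> \sum_y p x a y * f y <= vmax f.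
Proof.
move=> Ha; have [H0 H1] := Hp x a Ha.
apply: le_trans (_ : \sum_y p x a y * vmax f <= _).
  by apply: ler_sum => y _; apply: ler_wpM2l => //; apply: vmax_ge.
by rewrite -mulr_suml H1 mul1r.
Qed.
Lemma sum_p_ge x a (f : X -> R) : a \in A x -> vmin f <= \sum_y p x a y * f y.
Proof.
move=> Ha; have [H0 H1] := Hp x a Ha.
apply: le_trans (_ : \sum_y p x a y * vmin f <= _).
  by rewrite -mulr_suml H1 mul1r.
by apply: ler_sum => y _; apply: ler_wpM2l => //; apply: vmin_le.
Qed.

Lemma probdiff (P Q d : X -> R) :
  (forall z, 0 <= P z) -> (forall z, 0 <= Q z) ->
  \sum_z P z = 1 -> \sum_z Q z = 1 ->
  \sum_z P z * d z - \sum_z Q z * d z <=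
    (1 - \sum_z Num.min (P z) (Q z)) * sp d.
Proof.
move=> P0 Q0 P1 Q1.
set mn := fun z => Num.min (P z) (Q z).
have eP : \sum_z P z * d z = \sum_z (P z - mn z) * d z + \sum_z mn z * d z.
  by rewrite -big_split; apply: eq_bigr => z _ /=; rewrite mulrBl subrK.
have eQ : \sum_z Q z * d z = \sum_z (Q z - mn z) * d z + \sum_z mn z * d z.
  by rewrite -big_split; apply: eq_bigr => z _ /=; rewrite mulrBl subrK.
have h1 : \sum_z (P z - mn z) * d z <= (1 - \sum_z mn z) * vmax d.
  apply: le_trans (_ : \sum_z (P z - mn z) * vmax d <= _).
    apply: ler_sum => z _; apply: ler_wpM2l; last exact: vmax_ge.
    by rewrite subr_ge0 /mn ge_min lexx.
  by rewrite -mulr_suml sumrB P1.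
have h2 : (1 - \sum_z mn z) * vmin d <= \sum_z (Q z - mn z) * d z.
  apply: le_trans (_ : \sum_z (Q z - mn z) * vmin d <= _).
    by rewrite -mulr_suml sumrB Q1.
  apply: ler_sum => z _; apply: ler_wpM2l; last exact: vmin_le.
  by rewrite subr_ge0 /mn ge_min lexx orbT.
rewrite eP eQ /sp mulrBr; lra.
Qed.


Lemma sum0' (q : X -> R) : \sum_y q y * 0 = 0.
Proof. by rewrite big1 // => y _; rewrite mulr0. Qed.

Lemma gamma_ge x y a b : a \in A x -> b \in A y ->
  1 - \sum_z Num.min (p x a z) (p y b z) <= gamma A p.
Proof.
move=> Ha Hb; rewrite /gamma.
apply: (bigmax_sup x) => //; apply: (bigmax_sup y) => //.
apply: (bigmax_sup a) => //; exact: (bigmax_sup b).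
Qed.

Lemma T_contr (alpha : R) (u v : X -> R) : 0 <= alpha ->
  sp (T A r p alpha u \- T A r p alpha v) <= alpha * gamma A p * sp (u \- v).
Proof.
move=> a0; apply: sp_le => x y /=.
have [a Ha Ea] := maxA_ex x (fun a => Ta r p alpha a u x).
have [b Hb Eb] := maxA_ex y (fun a => Ta r p alpha a v y).
have h1 : Ta r p alpha a v x <= T A r p alpha v x by apply: maxA_ge.
have h2 : Ta r p alpha b u y <= T A r p alpha u y by apply: maxA_ge.
rewrite /T in h1 h2 *; rewrite Ea Eb.
have [Pa0 Pa1] := Hp x a Ha; have [Pb0 Pb1] := Hp y b Hb.
have hd := probdiff (p x a) (p y b) (fun z => u z - v z) Pa0 Pb0 Pa1 Pb1.
have hg := gamma_ge x y a b Ha Hb.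
have hsp := sp_ge0 (u \- v).
apply: le_trans (_ : (Ta r p alpha a u x - Ta r p alpha a v x) -
   (Ta r p alpha b u y - Ta r p alpha b v y) <= _); first lra.
have -> : (Ta r p alpha a u x - Ta r p alpha a v x) -
   (Ta r p alpha b u y - Ta r p alpha b v y) =
   alpha * (\sum_z p x a z * (u z - v z) - \sum_z p y b z * (u z - v z)).
  rewrite /Ta.
  have -> : \sum_z p x a z * (u z - v z) = \sum_z p x a z * u z - \sum_z p x a z * v z.
    by rewrite -sumrB; apply: eq_bigr => z _; rewrite mulrBr.
  have -> : \sum_z p y b z * (u z - v z) = \sum_z p y b z * u z - \sum_z p y b z * v z.
    by rewrite -sumrB; apply: eq_bigr => z _; rewrite mulrBr.
  ring.
rewrite -mulrA; apply: ler_wpM2l => //.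
apply: le_trans hd _; apply: ler_wpM2r => //.
Qed.

Lemma VI_S alpha v0 n : VI A r p alpha v0 n.+1 = T A r p alpha (VI A r p alpha v0 n).
Proof. by []. Qed.

Lemma VI_contr alpha v0 n : 0 <= alpha ->
  sp (VI A r p alpha v0 n \- VI A r p alpha v0 n.+1) <=
  (alpha * gamma A p) ^+ n * sp (v0 \- T A r p alpha v0).
Proof.
move=> a0; elim: n => [|n IH]; first by rewrite expr0 mul1r.
rewrite VI_S [VI _ _ _ _ _ n.+2]VI_S.
apply: le_trans (T_contr _ _ _ a0) _.
have g0 : 0 <= gamma A p.
  have [a Ha] := HA ord0.
  apply: le_trans (gamma_ge ord0 ord0 a a Ha Ha).
  have [P0 P1] := Hp ord0 a Ha.
  rewrite subr_ge0 -P1; apply: ler_sum => z _; rewrite ge_min lexx //.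
rewrite exprS -(mulrA (alpha * gamma A p)); apply: ler_wpM2l => //; exact: mulr_ge0.
Qed.

Lemma init_bound alpha v0 : 0 <= alpha ->
  sp (v0 \- T A r p alpha v0) <= sp (v1 A r) + (1 + alpha) * sp v0.
Proof.
move=> a0; apply: sp_le => x y /=.
have h1 := sp_ge v0 x y.
have h2 : T A r p alpha v0 y <= v1 A r y + alpha * vmax v0.
  apply: maxA_le => a Ha; rewrite /Ta; apply: lerD; first exact: maxA_ge.
  by apply: ler_wpM2l => //; apply: sum_p_le.
have h3 : v1 A r x + alpha * vmin v0 <= T A r p alpha v0 x.
  have [a Ha Ea] := maxA_ex x (r x).
  rewrite /v1 Ea; apply: (le_trans _ (maxA_ge x (fun a => Ta r p alpha a v0 x) a Ha)).
  by rewrite /Ta lerD2l; apply: ler_wpM2l => //; apply: sum_p_ge.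
have h4 := sp_ge (v1 A r) y x.
have h5 : alpha * vmax v0 - alpha * vmin v0 = alpha * sp v0 by rewrite /sp mulrBr.
lra.
Qed.

Lemma sum_pi1 (pi : policy R m Act) h x : is_policy A pi -> \sum_a pi h x a = 1.
Proof.
move=> /(_ h x) [P0 [Pout P1]]; rewrite (bigID (fun a => a \in A x)) /= P1.
by rewrite big1 ?addr0 // => a Ha; exact: Pout.
Qed.

Lemma sum_pi_le (pi : policy R m Act) h x (g : Act -> R) c : is_policy A pi ->
  (forall a, a \in A x -> g a <= c) -> \sum_a pi h x a * g a <= c.
Proof.
move=> Hpi Hg; have [P0 [Pout _]] := Hpi h x.
apply: le_trans (_ : \sum_a pi h x a * c <= _).
  apply: ler_sum => a _; case: (boolP (a \in A x)) => Ha.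
    by apply: ler_wpM2l => //; exact: Hg.
  by rewrite Pout // !mul0r.
by rewrite -mulr_suml sum_pi1 // mul1r.
Qed.

Lemma det_is_policy (phi : X -> Act) : (forall x, phi x \in A x) ->
  is_policy A (det_policy R phi).
Proof.
move=> Hphi h x; split.
  by move=> a; rewrite /det_policy; case: ifP => _; [exact: ler01|exact: lexx].
split.
  move=> a Ha; rewrite /det_policy; case: eqP => // E.
  by rewrite E Hphi in Ha.
rewrite (bigD1 (phi x)) //= /det_policy eqxx big1 ?addr0 //.
by move=> a /andP[_ /negbTE ->].
Qed.

Lemma sum_pw x a (w : X -> R) c : a \in A x ->
  \sum_y p x a y * (w y + c) = \sum_y p x a y * w y + c.
Proof.
move=> Ha; have [_ P1] := Hp x a Ha.
rewrite -[c in RHS]mul1r -P1 mulr_suml -big_split; apply: eq_bigr => y _.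
by rewrite mulrDr.
Qed.

Lemma vN_up alpha (pi : policy R m Act) (w : X -> R) hh :
  0 <= alpha < 1 -> is_policy A pi ->
  (forall x a, a \in A x -> Ta r p alpha a w x <= w x + hh) ->
  forall N h x, vN r p alpha pi N h x <=
    w x + hh / (1 - alpha) + alpha ^+ N * vmax (fun y => - w y - hh / (1 - alpha)).
Proof.
move=> /andP[a0 a1] Hpi Hw.
set K := hh / (1 - alpha); set C := vmax _.
have eK : hh + alpha * K = K.
  rewrite /K; field; rewrite subr_eq0; apply/eqP => E; move: a1; rewrite E ltxx //.
elim=> [|N IH] h x /=.
  rewrite expr0 mul1r; have := vmax_ge (fun y => - w y - K) x; rewrite -/C /=; lra.
apply: sum_pi_le => // a Ha.
have h1 : \sum_y p x a y * vN r p alpha pi N (rcons h (x, a)) y <=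
          \sum_y p x a y * w y + (K + alpha ^+ N * C).
  rewrite -sum_pw //; apply: ler_sum => y _; apply: ler_wpM2l.
    by have [P0 _] := Hp x a Ha.
  by rewrite addrA; exact: IH.
have h2 := Hw x a Ha; rewrite /Ta in h2.
have h3 := ler_wpM2l a0 h1.
rewrite mulrDr mulrDr in h3.
rewrite exprS -mulrA; lra.
Qed.

Lemma vN_lo alpha (phi : X -> Act) (w : X -> R) ll :
  0 <= alpha < 1 -> (forall x, phi x \in A x) ->
  (forall x, w x + ll <= Ta r p alpha (phi x) w x) ->
  forall N h x,
    w x + ll / (1 - alpha) + alpha ^+ N * vmin (fun y => - w y - ll / (1 - alpha))
    <= vN r p alpha (det_policy R phi) N h x.
Proof.
move=> /andP[a0 a1] Hphi Hw.
set K := ll / (1 - alpha); set C := vmin _.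
have eK : ll + alpha * K = K.
  rewrite /K; field; rewrite subr_eq0; apply/eqP => E; move: a1; rewrite E ltxx //.
elim=> [|N IH] h x /=.
  rewrite expr0 mul1r; have := vmin_le (fun y => - w y - K) x; rewrite -/C /=; lra.
rewrite (bigD1 (phi x)) //= [X in _ <= _ + X]big1 ?addr0 /det_policy ?eqxx ?mul1r; last first.
  by move=> a /negbTE ->; rewrite mul0r.
have Ha := Hphi x.
have h1 : \sum_y p x (phi x) y * w y + (K + alpha ^+ N * C) <=
          \sum_y p x (phi x) y * vN r p alpha (det_policy R phi) N (rcons h (x, phi x)) y.
  rewrite -sum_pw //; apply: ler_sum => y _; apply: ler_wpM2l.
    by have [P0 _] := Hp x (phi x) Ha.
  by rewrite addrA; exact: IH.
have h2 := Hw x; rewrite /Ta in h2.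
have h3 := ler_wpM2l a0 h1.
rewrite mulrDr mulrDr in h3.
rewrite exprS -mulrA; lra.
Qed.

Let Mr := \sum_(x : X) \sum_(a : Act) `|r x a|.

Lemma r_le x a : `|r x a| <= Mr.
Proof.
rewrite /Mr (bigD1 x) //=; apply: le_trans (_ : \sum_a `|r x a| <= _).
  by rewrite (bigD1 a) //= lerDl sumr_ge0.
by rewrite lerDl sumr_ge0 // => y _; rewrite sumr_ge0.
Qed.

Lemma vN_diff alpha (pi : policy R m Act) : 0 <= alpha -> is_policy A pi ->
  forall k h x, `|vN r p alpha pi k.+1 h x - vN r p alpha pi k h x| <= alpha ^+ k * Mr.
Proof.
move=> a0 Hpi; elim=> [|k IH] h x.
  rewrite /= subr0 expr0 mul1r.
  apply: le_trans (ler_norm_sum _ _ _) _.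
  apply: le_trans (_ : \sum_a pi h x a * Mr <= _); last first.
    by rewrite -mulr_suml sum_pi1 // mul1r.
  have [P0 _] := Hpi h x.
  apply: ler_sum => a _; rewrite normrM ger0_norm //.
  rewrite sum0' mulr0 addr0.
  by apply: ler_wpM2l => //; exact: r_le.
have E : vN r p alpha pi k.+2 h x - vN r p alpha pi k.+1 h x =
  \sum_a pi h x a * (alpha *
     \sum_y p x a y * (vN r p alpha pi k.+1 (rcons h (x, a)) y -
                       vN r p alpha pi k (rcons h (x, a)) y)).
  rewrite [vN _ _ _ _ k.+2 _ _]/= [vN _ _ _ _ k.+1 _ _]/= -sumrB.
  apply: eq_bigr => a _.
  have -> : \sum_y p x a y * (vN r p alpha pi k.+1 (rcons h (x, a)) y -
                       vN r p alpha pi k (rcons h (x, a)) y) =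
     \sum_y p x a y * vN r p alpha pi k.+1 (rcons h (x, a)) y -
     \sum_y p x a y * vN r p alpha pi k (rcons h (x, a)) y.
    by rewrite -sumrB; apply: eq_bigr => y _; rewrite mulrBr.
  rewrite /=; ring.
rewrite E; apply: le_trans (ler_norm_sum _ _ _) _.
apply: le_trans (_ : \sum_a pi h x a * (alpha ^+ k.+1 * Mr) <= _); last first.
  by rewrite -mulr_suml sum_pi1 // mul1r.
have [P0 [Pout _]] := Hpi h x.
apply: ler_sum => a _; case: (boolP (a \in A x)) => Ha; last first.
  by rewrite Pout // !mul0r normr0.
rewrite normrM ger0_norm //; apply: ler_wpM2l => //.
rewrite normrM ger0_norm // exprS -mulrA; apply: ler_wpM2l => //.
have [Q0 Q1] := Hp x a Ha.
apply: le_trans (ler_norm_sum _ _ _) _.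
apply: le_trans (_ : \sum_y p x a y * (alpha ^+ k * Mr) <= _); last first.
  by rewrite -mulr_suml Q1 mul1r.
by apply: ler_sum => y _; rewrite normrM ger0_norm //; apply: ler_wpM2l => //.
Qed.

Lemma vN_cvg alpha (pi : policy R m Act) : 0 <= alpha < 1 -> is_policy A pi ->
  forall h x, cvgn (fun N => vN r p alpha pi N h x).
Proof.
move=> /andP[a0 a1] Hpi h x.
have a1' : 0 < 1 - alpha by rewrite subr_gt0.
set K' := Mr / (1 - alpha).
set b := fun N => vN r p alpha pi N h x - alpha ^+ N * K'.
set g := fun N : nat => alpha ^+ N * K'.
have Hw0 : forall x0 a, a \in A x0 -> Ta r p alpha a (fun=> 0) x0 <= 0 + Mr.
  move=> y a Ha; rewrite /Ta sum0' mulr0 addr0 add0r.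
  exact: le_trans (ler_norm _) (r_le _ _).
have H := @vN_up alpha pi (fun _ => 0) Mr (introT andP (conj a0 a1)) Hpi Hw0.
set C := vmax _ in H.
have aux : forall N, alpha ^+ N * C <= `|C|.
  move=> N; apply: le_trans (ler_norm _) _.
  rewrite normrM normrX (ger0_norm a0); apply: ler_piMl => //.
  exact: exprn_ile1 a0 (ltW a1).
have bnd' : has_ubound (range b).
  exists (0 + Mr / (1 - alpha) + `|C|).
  move=> _ [N _ <-]; rewrite /b.
  have h1 := H N h x; have h2 := aux N.
  have h3 : 0 <= alpha ^+ N * K'.
    apply: mulr_ge0; first exact: exprn_ge0.
    by apply: divr_ge0 => //; [apply: sumr_ge0 => y _; apply: sumr_ge0|exact: ltW].
  simpl in h1; lra.
have bnd_inc : nondecreasing_seq b.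
  apply/nondecreasing_seqP => N; rewrite /b.
  have := vN_diff alpha pi a0 Hpi N h x; rewrite ler_norml => /andP[H1 _].
  have -> : alpha ^+ N.+1 * K' = alpha ^+ N * K' - alpha ^+ N * Mr.
    rewrite /K' exprS; field; rewrite subr_eq0; apply/eqP => E; move: a1; rewrite E ltxx //.
  lra.
have cb := nondecreasing_cvgn bnd_inc bnd'.
have cg : g @ \oo --> 0 * K'.
  apply: cvgMr_tmp; apply: cvg_expr; rewrite ger0_norm //.
have -> : (fun N => vN r p alpha pi N h x) = b + g.
  by apply: funext => N; rewrite /b /g /= subrK.
exact: is_cvgD (cvgP _ cb) (cvgP _ cg).
Qed.

Lemma vpi_up alpha (pi : policy R m Act) (w : X -> R) hh :
  0 <= alpha < 1 -> is_policy A pi ->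
  (forall x a, a \in A x -> Ta r p alpha a w x <= w x + hh) ->
  forall x, vpi r p alpha pi x <= w x + hh / (1 - alpha).
Proof.
move=> Ha Hpi Hw x; have H := vN_up alpha pi w hh Ha Hpi Hw.
have /andP[a0 a1] := Ha.
set C := vmax _ in H.
have c0 : (fun N => alpha ^+ N * C) @ \oo --> 0.
  rewrite -(mul0r C); apply: cvgMr_tmp; apply: cvg_expr; rewrite ger0_norm //.
have cg : (fun N => w x + hh / (1 - alpha) + alpha ^+ N * C) @ \oo --> w x + hh / (1 - alpha).
  rewrite -[X in _ --> X]addr0; apply: cvgD => //; exact: cvg_cst.
rewrite /vpi; apply: le_trans (ler_lim (vN_cvg alpha pi Ha Hpi [::] x) (cvgP _ cg) _) _.
  by apply: nearW => N; exact: H.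
by rewrite (cvg_lim (@Rhausdorff R) cg).
Qed.

Lemma vpi_lo alpha (phi : X -> Act) (w : X -> R) ll :
  0 <= alpha < 1 -> (forall x, phi x \in A x) ->
  (forall x, w x + ll <= Ta r p alpha (phi x) w x) ->
  forall x, w x + ll / (1 - alpha) <= vpi r p alpha (det_policy R phi) x.
Proof.
move=> Ha Hphi Hw x; have H := vN_lo alpha phi w ll Ha Hphi Hw.
have /andP[a0 a1] := Ha.
set C := vmin _ in H.
have c0 : (fun N => alpha ^+ N * C) @ \oo --> 0.
  rewrite -(mul0r C); apply: cvgMr_tmp; apply: cvg_expr; rewrite ger0_norm //.
have cg : (fun N => w x + ll / (1 - alpha) + alpha ^+ N * C) @ \oo --> w x + ll / (1 - alpha).
  rewrite -[X in _ --> X]addr0; apply: cvgD => //; exact: cvg_cst.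
rewrite /vpi; apply: le_trans _ (ler_lim (cvgP _ cg) (vN_cvg alpha _ Ha (det_is_policy phi Hphi) [::] x) _).
  by rewrite (cvg_lim (@Rhausdorff R) cg).
by apply: nearW => N; exact: H.
Qed.

Lemma Ta_split alpha a (u v : X -> R) x :
  Ta r p alpha a v x = Ta r p alpha a u x + alpha * \sum_y p x a y * (v y - u y).
Proof.
rewrite /Ta.
have -> : \sum_y p x a y * (v y - u y) = \sum_y p x a y * v y - \sum_y p x a y * u y.
  by rewrite -sumrB; apply: eq_bigr => y _; rewrite mulrBr.
ring.
Qed.

Lemma eps_opt alpha eps (phi : X -> Act) (u : X -> R) :
  0 < alpha < 1 -> 0 < eps -> (forall x, phi x \in A x) ->
  Tphi r p alpha phi u = T A r p alpha u ->
  sp (u \- T A r p alpha u) <= (1 - alpha) / alpha * eps ->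
  eps_optimal A r p alpha eps (det_policy R phi).
Proof.
move=> /andP[a0 a1] e0 Hphi Ephi Hsp x.
have Ha : 0 <= alpha < 1 by rewrite ltW.
set Tu := T A r p alpha u; set e := u \- Tu.
have Hw : forall x a, a \in A x -> Ta r p alpha a Tu x <= Tu x + (- alpha * vmin e).
  move=> y a Ha'; rewrite (Ta_split _ _ u).
  apply: lerD; first exact: (maxA_ge y (fun a => Ta r p alpha a u y) a Ha').
  rewrite mulNr -mulrN; apply: ler_wpM2l; first exact: ltW.
  apply: le_trans (sum_p_le _ _ _ Ha') _; apply: vmax_le => z.
  by rewrite lerNr opprB; apply: (vmin_le e).
have Hl : forall x, Tu x + (- alpha * vmax e) <= Ta r p alpha (phi x) Tu x.
  move=> y; rewrite (Ta_split _ _ u).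
  have -> : Ta r p alpha (phi y) u y = Tu y.
    by rewrite -/(Tphi r p alpha phi u y) Ephi.
  apply: lerD => //.
  rewrite mulNr -mulrN; apply: ler_wpM2l; first exact: ltW.
  apply: le_trans _ (sum_p_ge _ _ _ (Hphi y)); apply: vmin_ge => z.
  by rewrite lerNl opprB; apply: (vmax_ge e).
have U : vopt A r p alpha x <= Tu x + (- alpha * vmin e) / (1 - alpha).
  apply: ge_sup.
    exists (vpi r p alpha (det_policy R phi) x); exists (det_policy R phi) => //.
    exact: det_is_policy phi Hphi.
  move=> _ [pi Hpi <-]; exact: (vpi_up alpha pi Tu _ Ha Hpi Hw x).
have L := vpi_lo alpha phi Tu _ Ha Hphi Hl x.
have a1' : 0 < 1 - alpha by rewrite subr_gt0.
have K1 : alpha * sp e <= (1 - alpha) * eps.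
  have := ler_wpM2l (ltW a0) Hsp.
  have -> : alpha * ((1 - alpha) / alpha * eps) = (1 - alpha) * eps.
    by field; rewrite gt_eqF.
  by [].
have K2 : alpha * sp e / (1 - alpha) <= eps.
  by rewrite ler_pdivrMr // [eps * _]mulrC.
have K3 : (- alpha * vmin e) / (1 - alpha) - (- alpha * vmax e) / (1 - alpha)
          = alpha * sp e / (1 - alpha).
  by rewrite /sp; field; rewrite gt_eqF.
lra.
Qed.
End Basics.

Section FB.
Variable R : realType.
Variables eps gam s1 s0 : R.
Hypotheses (e0 : 0 < eps) (g0 : 0 < gam) (g1 : gam <= 1) (s1p : 0 <= s1) (s0p : 0 <= s0)
  (sp0 : 0 < s1 + s0).

Ltac hyps := have ? := e0; have ? := g0; have ? := g1; have ? := s1p; have ? := s0p; have ? := sp0.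

Let D (a : R) := s1 + (1 + a) * s0.
Let Nf (a : R) := (1 - a) * eps * gam / D a.
Let q (a : R) := ln (Nf a) / ln (a * gam).
Definition Fb (a : R) : R := Num.max ((Num.ceil (q a))%:~R) 1.

Lemma D_gt0 a : 0 <= a -> 0 < D a.
Proof.
move=> a0; rewrite /D; have h := mulr_ge0 a0 s0p.
rewrite mulrDl mul1r addrA; apply: (lt_le_trans sp0); rewrite lerDl; exact: h.
Qed.

Lemma Nf_gt0 a : 0 <= a < 1 -> 0 < Nf a.
Proof.
move=> /andP[a0 a1]; rewrite /Nf; apply: divr_gt0; last exact: D_gt0.
by rewrite mulr_gt0 // mulr_gt0 // subr_gt0.
Qed.

Lemma L_lt0 a : 0 < a < 1 -> ln (a * gam) < 0.
Proof.
move=> /andP[a0 a1]; apply: ln_lt0; rewrite mulr_gt0 //=.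
by apply: le_lt_trans a1; rewrite ler_piMr // ltW.
Qed.

Lemma Fb_n a : 0 < a < 1 -> exists n : nat,
  [/\ (1 <= n)%N, n%:R <= Fb a & (a * gam) ^+ n.-1 * D a <= (1 - a) / a * eps].
Proof.
move=> /andP[a0 a1]; have aa : 0 < a < 1 by rewrite a0.
have a0' : 0 <= a < 1 by rewrite ltW.
set k := Num.ceil (q a).
set kk := Num.max k 1.
have kk1 : 1 <= kk by rewrite le_max lexx orbT.
exists `|kk|%N.
have nE : (`|kk|%N)%:R = kk%:~R :> R by rewrite natr_absz ger0_norm // (le_trans _ kk1).
have n1 : (1 <= `|kk|)%N by rewrite absz_gt0 gt_eqF // (lt_le_trans _ kk1).
split => //.
- rewrite nE /Fb -/k /kk; case: (leP 1 k) => hk; first by rewrite le_max lexx.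
  by rewrite le_max lexx orbT.
- have qn : q a <= (`|kk|%N)%:R.
    rewrite nE; apply: le_trans (ceil_ge _) _; rewrite -/k ler_int le_max lexx //.
  have L0 := L_lt0 a aa.
  move: qn; rewrite /q ler_ndivrMr // => qn.
  have pos1 : 0 < (a * gam) ^+ `|kk|%N by rewrite exprn_gt0 // mulr_gt0.
  have H : (a * gam) ^+ `|kk|%N <= Nf a.
    rewrite -ler_ln ?posrE //; last exact: Nf_gt0 a a0'.
    by rewrite lnXn ?mulr_gt0 // -mulr_natr mulrC.
  have Dp := D_gt0 a (ltW a0).
  rewrite -(prednK n1) exprS in H.
  rewrite /Nf ler_pdivlMr // in H.
  have ag : 0 < a * gam by rewrite mulr_gt0.
  rewrite -(ler_pM2l ag).
  have -> : a * gam * ((1 - a) / a * eps) = (1 - a) * eps * gam.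
    by field; rewrite gt_eqF.
  by rewrite mulrA.
Qed.

Lemma ln_le (a b : R) : 0 < a -> a <= b -> ln a <= ln b.
Proof. by move=> a0 ab; rewrite ler_ln ?posrE // (lt_le_trans a0 ab). Qed.

Lemma Fb_le1 (a : R) : 0 < a < 1 -> q a <= 1 -> Fb a = 1.
Proof.
move=> aa qa; rewrite /Fb; apply/max_idPr.
by rewrite -[1]/(1%:~R) ler_int ceil_le_int.
Qed.

Lemma Nf_anti (a b : R) : 0 < a -> a <= b -> b < 1 -> Nf b <= Nf a.
Proof.
move=> a0 ab b1.
have Da := D_gt0 a (ltW a0); have Db := D_gt0 b (ltW (lt_le_trans a0 ab)).
rewrite /Nf ler_pdivrMr // [X in _ <= X]mulrAC ler_pdivlMr //.
have h1 : 0 <= 1 - b by rewrite subr_ge0 ltW.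
have h2 : D a <= D b by rewrite /D lerD2l ler_wpM2r // lerD2l.
have h3 : (1 - b) <= (1 - a) by rewrite lerD2l lerN2.
have h4 : 0 <= eps * gam by rewrite mulr_ge0 // ltW.
rewrite -!mulrA; apply: ler_pM => //.
  by rewrite mulr_ge0 ?mulr_ge0 // ltW.
apply: ler_wpM2l; first exact: ltW.
by apply: ler_wpM2l; first exact: ltW.
Qed.

Lemma Fb_mono (a b : R) : 0 < a -> a <= b -> b < 1 -> Fb a <= Fb b.
Proof.
move=> a0 ab b1.
have a1 : a < 1 by exact: le_lt_trans b1.
have b0 : 0 < b by exact: lt_le_trans ab.
have aa : 0 < a < 1 by rewrite a0.
have bb : 0 < b < 1 by rewrite b0.
have La := L_lt0 a aa; have Lb := L_lt0 b bb.
case: (leP 1 (Nf a)) => hN.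
  rewrite Fb_le1 //; first by rewrite /Fb le_max lexx orbT.
  rewrite /q; apply: le_trans (_ : 0 <= 1) => //.
  by apply: mulr_ge0_le0; [exact: ln_ge0 | rewrite invr_le0 ltW].
have Nb : Nf b <= Nf a by exact: Nf_anti.
have Nb0 : 0 < Nf b by apply: Nf_gt0; rewrite ltW.
have Na0 : 0 < Nf a by apply: Nf_gt0; rewrite ltW.
have lNa : ln (Nf a) < 0 by apply: ln_lt0; rewrite Na0.
have lNab : ln (Nf b) <= ln (Nf a) by exact: ln_le.
have Lab : ln (a * gam) <= ln (b * gam) by apply: ln_le; [rewrite mulr_gt0|rewrite ler_wpM2r // ltW].
have qq : q a <= q b.
  rewrite /q -(mulrNN (ln (Nf a))) -invrN -(mulrNN (ln (Nf b))) -invrN.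
  rewrite ler_pdivrMr ?oppr_gt0 // mulrAC ler_pdivlMr ?oppr_gt0 //.
  have P1 : 0 < - ln (Nf a) by rewrite oppr_gt0.
  have Q2 : 0 < - ln (b * gam) by rewrite oppr_gt0.
  have e1 : - ln (Nf a) <= - ln (Nf b) by rewrite lerN2.
  have e2 : - ln (b * gam) <= - ln (a * gam) by rewrite lerN2.
  apply: le_trans (_ : - ln (Nf b) * - ln (b * gam) <= _).
    by apply: ler_wpM2r => //; exact: ltW.
  by apply: ler_wpM2l => //; apply: le_trans (ltW P1) e1.
rewrite /Fb; apply: le_max2 => //; rewrite ler_int; exact: le_ceil.
Qed.


Lemma Fb_0 : Fb a @[a --> (0:R)^'+] --> (1:R).
Proof.
set d := eps / (eps + s1 + 2 * s0).
have dd : 0 < eps + s1 + 2 * s0 by hyps; lra.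
have d0 : 0 < d by rewrite divr_gt0.
apply: cvg_near_cst; near=> a.
have a0 : 0 < a by near: a; exact: nbhs_right_gt.
have a1 : a < 1 by near: a; apply: nbhs_right_lt; exact: ltr01.
have ad : a <= d by near: a; apply: nbhs_right_le.
have aa : 0 < a < 1 by rewrite a0 a1.
apply: Fb_le1 => //.
rewrite /q ler_ndivrMr ?L_lt0 // mul1r.
apply: ln_le; first by rewrite mulr_gt0.
rewrite /Nf ler_pdivlMr; last exact: D_gt0 a (ltW a0).
move: ad; rewrite /d ler_pdivlMr // => ad.
have h1 : a * a * s0 <= a * s0.
  by rewrite -mulrA; apply: ler_piMl; [rewrite mulr_ge0 // ltW | exact: ltW].
have k : a * D a <= (1 - a) * eps by rewrite /D; hyps; nra.
have := ler_wpM2l (ltW g0) k.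
have -> : gam * (a * D a) = a * gam * D a by ring.
by have -> : gam * ((1 - a) * eps) = (1 - a) * eps * gam by ring.
Unshelve. all: by end_near.
Qed.

Lemma Fb_1 : Fb a @[a --> (1:R)^'-] --> +oo.
Proof.
apply/cvgryPger => M _.
set M' := Num.max M 0.
have M'0 : 0 <= M' by rewrite le_max lexx orbT.
set L0 := - ln (gam / 2).
have L0p : 0 < L0.
  rewrite oppr_gt0; apply: ln_lt0; rewrite divr_gt0 //=.
  by rewrite ltr_pdivrMr //; hyps; lra.
set K := eps * gam / (s1 + s0).
have K0 : 0 < K by rewrite divr_gt0 // mulr_gt0.
set d := expR (- (M' * L0)) / K.
have d0 : 0 < d by rewrite divr_gt0 // expR_gt0.
near=> a.
have a1 : a < 1 by near: a; exact: nbhs_left_lt.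
have ah : 1 / 2 < a by near: a; apply: nbhs_left_gt; hyps; lra.
have ad : 1 - a < d by near: a; exact: nbhs_left_ltBl.
have a0 : 0 < a by hyps; lra.
have aa : 0 < a < 1 by rewrite a0 a1.
apply: le_trans (_ : M' <= _); first by rewrite le_max lexx.
apply: le_trans (_ : q a <= _); last first.
  by rewrite /Fb le_max; apply/orP; left; exact: ceil_ge.
rewrite /q ler_ndivlMr ?L_lt0 //.
have LaL : - L0 <= ln (a * gam).
  rewrite /L0 opprK; apply: ln_le; first by rewrite divr_gt0.
  by rewrite mulrC; apply: ler_wpM2r; [exact: ltW | hyps; lra].
have Na0 : 0 < Nf a by apply: Nf_gt0; rewrite ltW.
have NK : Nf a <= (1 - a) * K.
  have -> : Nf a = (1 - a) * eps * gam * (D a)^-1 by [].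
  have -> : (1 - a) * K = (1 - a) * eps * gam * (s1 + s0)^-1 by rewrite /K; ring.
  apply: ler_wpM2l; first by rewrite mulr_ge0 ?mulr_ge0 ?subr_ge0 ?ltW.
  rewrite lef_pV2 ?posrE ?(D_gt0 a (ltW a0)) //.
  by rewrite /D; have h := mulr_ge0 (ltW a0) s0p; hyps; lra.
have NE : Nf a < expR (- (M' * L0)).
  apply: le_lt_trans NK _.
  have -> : expR (- (M' * L0)) = d * K by rewrite /d divfK // gt_eqF.
  by rewrite ltr_pM2r.
have lN : ln (Nf a) < - (M' * L0).
  by rewrite -[X in _ < X]expRK ltr_ln ?posrE ?expR_gt0.
have : M' * (- L0) <= M' * ln (a * gam) by rewrite ler_wpM2l.
rewrite mulrN => h; apply: ltW; exact: lt_le_trans lN h.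
Unshelve. all: by end_near.
Qed.

End FB.
Theorem theorem2 (R : realType) :
  (forall (m : nat) (Act : finType) (A : 'I_m.+1 -> {set Act})
          (r : 'I_m.+1 -> Act -> R) (p : 'I_m.+1 -> Act -> 'I_m.+1 -> R)
          (v0 : 'I_m.+1 -> R) (alpha eps : R),
     (forall x, exists a, a \in A x) ->
     (forall x a, a \in A x -> (forall y, 0 <= p x a y) /\ \sum_(y : 'I_m.+1) p x a y = 1) ->
     0 < alpha < 1 -> 0 < eps ->
     0 < gamma A p <= 1 ->
     0 < sp (v1 A r) + sp v0 ->
     exists N : nat,
       [/\ (1 <= N)%N,
           (forall n : nat, (1 <= n < N)%N ->
              (1 - alpha) / alpha * eps < sp (VI A r p alpha v0 n.-1 \- VI A r p alpha v0 n)),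
           sp (VI A r p alpha v0 N.-1 \- VI A r p alpha v0 N) <= (1 - alpha) / alpha * eps,
           N%:R <= Fbound eps (gamma A p) (v1 A r) v0 alpha
         & forall phi : 'I_m.+1 -> Act,
             (forall x, phi x \in A x) ->
             Tphi r p alpha phi (VI A r p alpha v0 N.-1) = VI A r p alpha v0 N ->
             eps_optimal A r p alpha eps (det_policy R phi)]) /\
  (forall (m : nat) (eps gam : R) (v0 v1 : 'I_m.+1 -> R),
     0 < eps -> 0 < gam <= 1 -> 0 < sp v1 + sp v0 ->
     [/\ Fbound eps gam v1 v0 a @[a --> (0:R)^'+] --> (1:R),
         Fbound eps gam v1 v0 a @[a --> (1:R)^'-] --> +oo
       & forall a b : R, 0 < a -> a <= b -> b < 1 ->
           Fbound eps gam v1 v0 a <= Fbound eps gam v1 v0 b]).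
Proof.
split.
  move=> m Act A r p v0 alpha eps HA Hp aa e0 gg sp0.
  have /andP[a0 a1] := aa; have /andP[g0 g1] := gg.
  have a0' : 0 <= alpha by exact: ltW.
  set c := (1 - alpha) / alpha * eps.
  have [n0 [n01 n0F n0D]] := @Fb_n _ _ _ _ _ e0 g0 g1 (@sp_ge0 _ _ v0) sp0 alpha aa.
  have P0 : (1 <= n0)%N && (sp (VI A r p alpha v0 n0.-1 \- VI A r p alpha v0 n0) <= c).
    rewrite n01 /=.
    have := @VI_contr R m Act A r p HA Hp alpha v0 n0.-1 a0'.
    rewrite (prednK n01) => H; apply: (le_trans H).
    apply: le_trans n0D; apply: ler_wpM2l; first by rewrite exprn_ge0 // mulr_ge0 // ltW.
    exact: (@init_bound R m Act A r p HA Hp alpha v0 a0').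
  have exP : exists n, (1 <= n)%N && (sp (VI A r p alpha v0 n.-1 \- VI A r p alpha v0 n) <= c).
    by exists n0.
  case: (ex_minnP exP) => N /andP[N1 HN] minN.
  exists N; split => //.
  - move=> n /andP[n1 nN]; rewrite ltNge; apply/negP => H.
    have := minN n; rewrite n1 H => /(_ isT); rewrite leqNgt nN.
    by [].
  - apply: le_trans n0F; rewrite ler_nat; apply: minN; exact: P0.
  - move=> phi Hphi Ephi.
    have EN : VI A r p alpha v0 N = T A r p alpha (VI A r p alpha v0 N.-1).
      by rewrite -[in LHS](prednK N1).
    rewrite EN in Ephi HN.
    exact: (@eps_opt R m Act A r p Hp alpha eps phi _ aa e0 Hphi Ephi HN).
move=> m eps gam v0 v1 e0 gg sp0; have /andP[g0 g1] := gg.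
split.
- exact: (@Fb_0 _ _ _ _ _ e0 g0 g1 (@sp_ge0 _ _ v1) (@sp_ge0 _ _ v0) sp0).
- exact: (@Fb_1 _ _ _ _ _ e0 g0 g1 (@sp_ge0 _ _ v1) (@sp_ge0 _ _ v0) sp0).
- move=> a b a0 ab b1; exact: (@Fb_mono _ _ _ _ _ e0 g0 g1 (@sp_ge0 _ _ v0) sp0 a b a0 ab b1).
Qed.
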